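(* Let $(A_j)_{j\ge1}$ be a sequence of nonempty subsets of $\mathbb{Z}$ such that there is a positive integer $q$ with $A_j\subset A_{j+q}$ for all $j$, and such that $\sup_j|A_j|<\infty$. If there exists a sequence $(U_j)_{j\ge1}$ of subsets of $\mathbb{Z}$ with $A_j+U_j=A_{j+q}$ for all $j$, then $(A_j)_{j\ge1}$ is strongly eventually periodic.
   Context: For $B,C\subset\mathbb{Z}$, $B+C=\{b+c:b\in B,c\in C\}$. A sequence $(A_j)_{j\ge1}$ of nonempty subsets of $\mathbb{Z}$ is strongly eventually periodic (SEP) if there exist a positive integer $p$ and finite sequences of sets $(B_\ell)_{\ell=1}^p$, $(C_\ell)_{\ell=1}^p$ such that $(A_j)$ equals $B_1,\ldots,B_p$ followed by the infinite repetition of $B_1+C_1,\ldots,B_p+C_p$. *)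

(* Defs.v *)
(* Subsets of Z are predicates Z -> Prop; sequences of sets
   (A_j)_{j>=1} are functions nat -> (Z -> Prop), only indices j >= 1 matter. *)
From Stdlib Require Import ZArith List.
Open Scope Z_scope.

Definition zset := Z -> Prop.

Definition sumset (B C : zset) : zset :=
  fun x => exists b c, B b /\ C c /\ x = b + c.

Definition set_eq (X Y : zset) : Prop := forall x, X x <-> Y x.
Definition subset (X Y : zset) : Prop := forall x, X x -> Y x.

Definition card_le (X : zset) (M : nat) : Prop :=
  exists l : list Z, (length l <= M)%nat /\ forall x, X x -> In x l.

Definition SEP (A : nat -> zset) : Prop :=
  exists (p : nat) (B C : nat -> zset), (1 <= p)%nat /\
    (forall l, (1 <= l <= p)%nat -> set_eq (A l) (B l)) /\
    (forall k l, (1 <= k)%nat -> (1 <= l <= p)%nat ->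
        set_eq (A (k * p + l)%nat) (sumset (B l) (C l))).

(* Main.v *)
Require Import Defs.
From Stdlib Require Import ZArith List Lia Classical.

Lemma mono_l (A : nat -> zset) (q : nat) :
  (forall j, (1 <= j)%nat -> subset (A j) (A (j + q)%nat)) ->
  forall j, (1 <= j)%nat -> forall d, subset (A j) (A (j + d*q)%nat).
Proof.
  intros H j Hj d. induction d as [|d IH]; intros x Hx.
  - replace (j + 0*q)%nat with j by lia. exact Hx.
  - replace (j + S d * q)%nat with ((j + d*q) + q)%nat by lia.
    apply H; [lia|]. apply IH, Hx.
Qed.

Lemma mono_le (A : nat -> zset) (q : nat) :
  (forall j, (1 <= j)%nat -> subset (A j) (A (j + q)%nat)) ->
  forall r n m, (1 <= r)%nat -> (n <= m)%nat -> subset (A (r + n*q)%nat) (A (r + m*q)%nat).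
Proof.
  intros H r n m Hr Hnm x Hx.
  replace (r + m*q)%nat with ((r + n*q) + (m-n)*q)%nat by nia.
  apply (mono_l A q H); [lia|exact Hx].
Qed.

Lemma stab_one (A : nat -> zset) (q M : nat) :
  (forall j, (1 <= j)%nat -> subset (A j) (A (j + q)%nat)) ->
  (forall j, (1 <= j)%nat -> card_le (A j) M) ->
  forall r, (1 <= r)%nat -> exists n, forall m, (n <= m)%nat ->
     subset (A (r + m*q)%nat) (A (r + n*q)%nat).
Proof.
  intros H HM r Hr. apply NNPP. intro Hn.
  assert (Hs : forall n, exists m x, (n <= m)%nat /\ A (r + m*q)%nat x /\ ~ A (r + n*q)%nat x).
  { intro n. apply NNPP. intro Hc. apply Hn. exists n. intros m Hm x Hx.
    apply NNPP. intro Hx'. apply Hc. exists m, x. auto. }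
  assert (Hk : forall k, exists n L, length L = k /\ NoDup L /\
              forall x, In x L -> A (r + n*q)%nat x).
  { induction k as [|k IH].
    - exists 0%nat, nil. repeat split; [constructor|intros x []].
    - destruct IH as [n [L [HL [HN HI]]]].
      destruct (Hs n) as [m [x [Hnm [Hxm Hxn]]]].
      exists m, (x :: L). repeat split.
      + simpl; lia.
      + constructor; [|exact HN]. intro Hin. apply Hxn, HI, Hin.
      + intros y [<-|Hy]; [exact Hxm|]. apply (mono_le A q H r n m Hr Hnm), HI, Hy. }
  destruct (Hk (S M)) as [n [L [HL [HN HI]]]].
  destruct (HM (r + n*q)%nat ltac:(lia)) as [l [Hl Hin]].
  assert (length L <= length l)%nat.
  { apply NoDup_incl_length; [exact HN|]. intros x Hx. apply Hin, HI, Hx. }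
  lia.
Qed.

Lemma stab_all (A : nat -> zset) (q M : nat) :
  (forall j, (1 <= j)%nat -> subset (A j) (A (j + q)%nat)) ->
  (forall j, (1 <= j)%nat -> card_le (A j) M) ->
  forall Q, exists N, forall r, (1 <= r <= Q)%nat -> forall n, (N <= n)%nat ->
     subset (A (r + n*q)%nat) (A (r + N*q)%nat).
Proof.
  intros H HM Q. induction Q as [|Q IH].
  - exists 0%nat. intros; lia.
  - destruct IH as [N1 HN1].
    destruct (stab_one A q M H HM (S Q) ltac:(lia)) as [N2 HN2].
    exists (Nat.max N1 N2). intros r Hr n Hn x Hx.
    destruct (Nat.eq_dec r (S Q)) as [->|Hne].
    + apply (mono_le A q H (S Q) N2); [lia|lia|]. apply (HN2 n); [lia|exact Hx].
    + apply (mono_le A q H r N1); [lia|lia|]. apply (HN1 r ltac:(lia) n ltac:(lia)), Hx.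
Qed.

Lemma iter_U (A : nat -> zset) (q : nat) (U : nat -> zset) :
  (forall j, (1 <= j)%nat -> set_eq (sumset (A j) (U j)) (A (j + q)%nat)) ->
  forall j, (1 <= j)%nat -> forall t, exists V, set_eq (A (j + t*q)%nat) (sumset (A j) V).
Proof.
  intros H j Hj t. induction t as [|t IH].
  - exists (fun z => z = 0%Z). intro x. replace (j + 0*q)%nat with j by lia.
    split.
    + intro Hx. exists x, 0%Z. repeat split; auto; lia.
    + intros [b [c [Hb [Hc ->]]]]. subst c. rewrite Z.add_0_r. exact Hb.
  - destruct IH as [V HV]. exists (sumset V (U (j + t*q)%nat)). intro x.
    replace (j + S t * q)%nat with ((j + t*q) + q)%nat by lia.
    rewrite <- (H (j + t*q)%nat ltac:(lia) x). split.
    + intros [b [c [Hb [Hc ->]]]]. apply HV in Hb.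
      destruct Hb as [a [v [Ha [Hv ->]]]].
      exists a, (v + c)%Z. repeat split; auto; [|lia].
      exists v, c. auto.
    + intros [a [w [Ha [[v [c [Hv [Hc ->]]]] ->]]]].
      exists (a + v)%Z, c. repeat split; auto; [|lia].
      apply HV. exists a, v. auto.
Qed.

Lemma decomp (q l : nat) : (1 <= q)%nat -> (1 <= l)%nat ->
  exists r m, (1 <= r <= q)%nat /\ l = (r + m*q)%nat.
Proof.
  intros Hq Hl. exists (S ((l-1) mod q))%nat, ((l-1)/q)%nat.
  pose proof (Nat.div_mod_eq (l-1)%nat q). pose proof (Nat.mod_upper_bound (l-1)%nat q ltac:(lia)).
  split; [lia|]. nia.
Qed.

Theorem lemma5p10 (A : nat -> zset) (q : nat) :
  (forall j, (1 <= j)%nat -> exists x, A j x) ->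
  (1 <= q)%nat ->
  (forall j, (1 <= j)%nat -> subset (A j) (A (j + q)%nat)) ->
  (exists M : nat, forall j, (1 <= j)%nat -> card_le (A j) M) ->
  (exists U : nat -> zset, forall j, (1 <= j)%nat ->
      set_eq (sumset (A j) (U j)) (A (j + q)%nat)) ->
  SEP A.
Proof.
  intros _ Hq H [M HM] [U HU].
  destruct (stab_all A q M H HM q) as [N HN].
  assert (Heq : forall r n, (1 <= r <= q)%nat -> (N <= n)%nat ->
            set_eq (A (r + n*q)%nat) (A (r + N*q)%nat)).
  { intros r n Hr Hn x; split; intro Hx.
    - apply (HN r Hr n Hn), Hx.
    - apply (mono_le A q H r N n); [lia|lia|exact Hx]. }
  set (p := ((N+1)*q)%nat).
  exists p, A, (fun l c => forall a, A l a -> A (p + l)%nat (a + c)%Z).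
  split; [unfold p; nia|]. split; [intros l _ x; tauto|].
  intros k l Hk Hl.
  destruct (decomp q l Hq ltac:(lia)) as [r [m [Hr Hlm]]].
  assert (Hm : (m <= N)%nat).
  { assert (m*q < (N+1)*q)%nat by (unfold p in Hl; lia). nia. }
  assert (E1 : set_eq (A (k*p + l)%nat) (A (p + l)%nat)).
  { replace (k*p + l)%nat with (r + (k*(N+1)+m)*q)%nat by (unfold p; nia).
    replace (p + l)%nat with (r + ((N+1)+m)*q)%nat by (unfold p; nia).
    intro x. rewrite (Heq r (k*(N+1)+m)%nat Hr ltac:(nia) x).
    rewrite (Heq r ((N+1)+m)%nat Hr ltac:(lia) x). tauto. }
  destruct (iter_U A q U HU l ltac:(lia) (N+1)) as [V HV].
  assert (E2 : (p + l = l + (N+1)*q)%nat) by (unfold p; lia).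
  intro x. rewrite (E1 x). rewrite E2. split.
  - intro Hx. apply HV in Hx. destruct Hx as [a [v [Ha [Hv ->]]]].
    exists a, v. repeat split; auto. intros a' Ha'. apply HV.
    exists a', v. auto.
  - intros [a [c [Ha [Hc ->]]]]. apply Hc, Ha.
Qed.
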